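(* Suppose $P$ is a transition kernel on finite $\mathcal{S}$ with actions $\mathcal{A}$, $\mathcal{K}=\{(s_k,a_k)\}_{k=1}^K$, and coefficients $\lambda_k^{s,a}\ge0$ with $\sum_k\lambda_k^{s,a}=1$ satisfy $P(\cdot|s,a)=\sum_{k}\lambda_k^{s,a}P(\cdot|s_k,a_k)$ for all $(s,a)$. Then for every $V:\mathcal{S}\to\mathbb{R}$ and every $(s,a)$, $$\sum_{k=1}^K\lambda_k^{s,a}\sqrt{\mathrm{Var}_{s_k,a_k}(V)}\le\sqrt{\mathrm{Var}_{s,a}(V)}.$$
   Context: $\mathrm{Var}_{s,a}(V)=\sum_{s'}P(s'|s,a)V(s')^2-\big(\sum_{s'}P(s'|s,a)V(s')\big)^2$. (In the paper this arises from a linear transition model $P=\Phi\Psi$ with features satisfying the anchor-state assumption, in which case $P(\cdot|s,a)=\sum_k\lambda_k^{s,a}P(\cdot|s_k,a_k)$ with the convex anchor coefficients.) *)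

(* Defs.v *)
From mathcomp Require Import all_boot all_order all_algebra.
Set Implicit Arguments. Unset Strict Implicit. Unset Printing Implicit Defensive.
Import Order.TTheory GRing.Theory Num.Theory.
Local Open Scope ring_scope.

(* P s a s' = probability of moving to s' from state s under action a. *)
Definition is_transition_kernel (R : numDomainType) (S : finType) (A : Type)
  (P : S -> A -> S -> R) : Prop :=
  forall s a, (forall s', 0 <= P s a s') /\ \sum_(s' : S) P s a s' = 1.

Definition Var (R : numDomainType) (S : finType) (A : Type)
  (P : S -> A -> S -> R) (s : S) (a : A) (V : S -> R) : R :=
  \sum_(s' : S) P s a s' * V s' ^+ 2 - (\sum_(s' : S) P s a s' * V s') ^+ 2.

(* Main.v *)
Require Import Defs.
From mathcomp Require Import all_boot all_order all_algebra.
From mathcomp Require Import ring lra.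
Import Order.TTheory GRing.Theory Num.Theory.
Local Open Scope ring_scope.

Lemma jensen2 (R : rcfType) (I : finType) (w x : I -> R) :
  (forall i, 0 <= w i) -> \sum_i w i = 1 ->
  (\sum_i w i * x i) ^+ 2 <= \sum_i w i * x i ^+ 2.
Proof.
move=> w0 w1; set m := \sum_i w i * x i.
have H : 0 <= \sum_i w i * (x i - m) ^+ 2.
  by apply: sumr_ge0 => i _; rewrite mulr_ge0 ?sqr_ge0.
have E : \sum_i w i * (x i - m) ^+ 2 =
   \sum_i w i * x i ^+ 2 - m *+ 2 * \sum_i w i * x i + m ^+ 2 * \sum_i w i.
  transitivity (\sum_i (w i * x i ^+ 2 - m *+ 2 * (w i * x i) + m ^+ 2 * w i)).
    by apply: eq_bigr => i _; ring.
  by rewrite big_split sumrB /= -!mulr_sumr.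
move: H; rewrite E w1 -/m; lra.
Qed.

Theorem lemma3 (R : rcfType) (S : finType) (A : Type) (K : nat)
  (P : S -> A -> S -> R)
  (anchor_s : 'I_K -> S) (anchor_a : 'I_K -> A)
  (lambda : S -> A -> 'I_K -> R) :
  is_transition_kernel P ->
  (forall s a k, 0 <= lambda s a k) ->
  (forall s a, \sum_(k < K) lambda s a k = 1) ->
  (forall s a s', P s a s' = \sum_(k < K) lambda s a k * P (anchor_s k) (anchor_a k) s') ->
  forall (V : S -> R) (s : S) (a : A),
    \sum_(k < K) lambda s a k * Num.sqrt (Var P (anchor_s k) (anchor_a k) V)
      <= Num.sqrt (Var P s a V).
Proof.
move=> HP l0 l1 HL V s a.
set l := lambda s a.
set v := fun k : 'I_K => Var P (anchor_s k) (anchor_a k) V.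
set mk := fun k : 'I_K => \sum_(s' : S) P (anchor_s k) (anchor_a k) s' * V s'.
have v0 : forall k, 0 <= v k.
  move=> k; rewrite /v /Var subr_ge0; have [p0 p1] := HP (anchor_s k) (anchor_a k).
  exact: jensen2.
have mix : forall f : S -> R, \sum_(s' : S) P s a s' * f s' =
    \sum_(k < K) l k * \sum_(s' : S) P (anchor_s k) (anchor_a k) s' * f s'.
  move=> f; under eq_bigr => s' _ do rewrite HL mulr_suml.
  rewrite exchange_big; apply: eq_bigr => k _; rewrite mulr_sumr.
  by apply: eq_bigr => s' _; rewrite mulrA.
have Hvar : \sum_k l k * v k <= Var P s a V.
  rewrite /Var !mix.
  have -> : \sum_k l k * \sum_(s' : S) P (anchor_s k) (anchor_a k) s' * V s' ^+ 2
      = \sum_k l k * v k + \sum_k l k * mk k ^+ 2.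
    rewrite -big_split; apply: eq_bigr => k _; rewrite /v /Var /mk /=; ring.
  have J := @jensen2 R _ l mk (l0 s a) (l1 s a).
  rewrite -/(mk _); move: J; rewrite /mk; lra.
have Hs : \sum_k l k * Num.sqrt (v k) <= Num.sqrt (\sum_k l k * v k).
  have ge0 : 0 <= \sum_k l k * Num.sqrt (v k).
    by apply: sumr_ge0 => k _; rewrite mulr_ge0 ?sqrtr_ge0 ?l0.
  rewrite -[X in X <= _](ger0_norm ge0) -sqrtr_sqr.
  rewrite ler_sqrt; last by apply: sumr_ge0 => k _; rewrite mulr_ge0 ?l0 ?v0.
  have J := @jensen2 R _ l (fun k => Num.sqrt (v k)) (l0 s a) (l1 s a).
  apply: (le_trans J); rewrite le_eqVlt; apply/orP; left; apply/eqP/eq_bigr => k _; by rewrite sqr_sqrtr.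
apply: (le_trans Hs); rewrite ler_sqrt //.
apply: le_trans Hvar; by apply: sumr_ge0 => k _; rewrite mulr_ge0 ?l0 ?v0.
Qed.
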